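(* Let $f,g:\mathbb{R}^n\to[0,+\infty)$ and $h_1,h_2:\mathbb{R}^n\to\mathbb{R}$, let $C\subseteq\mathbb{R}^n$ be closed and convex, $\Omega:=\{x:g(x)\neq0\}$, $C\cap\Omega\neq\emptyset$, and assume: $f$ is convex; $g$ is differentiable with locally Lipschitz gradient; $h_1$ is differentiable with locally Lipschitz gradient; $h_2$ is convex. Let $F$, $H$ and Algorithm 1 be as in the context, with $x^0\in\mathrm{dom}F$, and assume $\mathcal{X}_0:=\{x\in\mathrm{dom}F:F(x)\le F(x^0)\}$ is compact. Let $\{(x^k,z^k,c_k):k\in\mathbb{N}\}$ be generated by Algorithm 1. Then: (i) $\{(x^k,z^k,c_k):k\in\mathbb{N}\}$ is bounded; (ii) $\lim_{k\to\infty}F(x^k)$ exists; (iii) $\lim_{k\to\infty}\|x^{k+1}-x^k\|_2=0$.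
   Context: $F(x)=f^2(x)/g(x)+h_1(x)-h_2(x)$ if $x\in\Omega\cap C$, $F(x)=+\infty$ otherwise. $\iota_C$ is the indicator of $C$, $h_2^\star$ the convex conjugate of $h_2$, $\partial h_2$ the convex subdifferential, $\mathrm{prox}_\varphi(y)=\arg\min_x\{\varphi(x)+\frac12\|x-y\|_2^2\}$. $H(x,z,c)=2cf(x)+\iota_C(x)-c^2g(x)+h_1(x)+h_2^\star(z)-\langle x,z\rangle$. Algorithm 1: given $x^0\in\mathrm{dom}F$, $0<\underline{\alpha}<\overline{\alpha}$, $\sigma>0$, $0<r<1$, for $k=0,1,2,\dots$: (Step 1) compute $c_k=f(x^k)/g(x^k)$, choose $z^k\in\partial h_2(x^k)$, set $\alpha:=\widetilde{\alpha}_k\in[\underline{\alpha},\overline{\alpha}]$; (Step 2) compute $\widehat{x}^k\in\mathrm{prox}_{2\alpha c_kf+\iota_C}\big(x^k-\alpha(\nabla h_1(x^k)-c_k^2\nabla g(x^k)-z^k)\big)$; if $\widehat{x}^k\in\Omega$ and $H(\widehat{x}^k,z^k,f(\widehat{x}^k)/g(\widehat{x}^k))+\frac{\sigma}{2}\|\widehat{x}^k-x^k\|_2^2\le F(x^k)$, set $x^{k+1}=\widehat{x}^k$, $\alpha_k:=\alpha$ and go to the next $k$; otherwise set $\alpha:=r\alpha$ and repeat Step 2. *)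

(* Defs.v *)
From HB Require Import structures.
From mathcomp Require Import all_boot all_order all_algebra.
From mathcomp Require Import all_classical all_reals all_analysis.
Set Implicit Arguments. Unset Strict Implicit. Unset Printing Implicit Defensive.
Import Order.TTheory GRing.Theory Num.Theory.
Import numFieldNormedType.Exports.
Local Open Scope classical_set_scope.
Local Open Scope ring_scope.

Section Defs.
Variables (R : realType) (n : nat).
Notation vec := 'rV[R]_n.

Definition dotv (x y : vec) : R := \sum_(i < n) x 0 i * y 0 i.
Definition norm2 (x : vec) : R := Num.sqrt (dotv x x).

Definition convex_fun (f : vec -> R) : Prop :=
  forall x y (t : R), 0 <= t <= 1 ->
    f (t *: x + (1 - t) *: y) <= t * f x + (1 - t) * f y.

Definition grad (f : vec -> R) (x : vec) : vec :=
  \row_(i < n) ('d f x : vec -> R) (delta_mx 0 i).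

Definition diff_loclip_grad (f : vec -> R) : Prop :=
  (forall x, differentiable f x) /\
  forall x, exists2 delta : R, 0 < delta & exists L : R, forall y z,
    norm2 (y - x) < delta -> norm2 (z - x) < delta ->
    norm2 (grad f y - grad f z) <= L * norm2 (y - z).

Definition subdiff (h : vec -> R) (x : vec) : set vec :=
  [set z | forall y, h x + dotv z (y - x) <= h y].

Definition conj_fun (h : vec -> R) (z : vec) : \bar R :=
  ereal_sup [set ((dotv x z - h x)%:E) | x in [set: vec]].

Definition indic (C : set vec) (x : vec) : \bar R :=
  if `[< C x >] then 0%E else +oo%E.

Definition is_prox (phi : vec -> \bar R) (y p : vec) : Prop :=
  forall x, (phi p + (2^-1 * norm2 (p - y) ^+ 2)%:E <=
             phi x + (2^-1 * norm2 (x - y) ^+ 2)%:E)%E.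

Definition Omega (g : vec -> R) : set vec := [set x | g x != 0].

Definition Fobj (f g h1 h2 : vec -> R) (C : set vec) (x : vec) : \bar R :=
  if `[< Omega g x /\ C x >] then ((f x ^+ 2 / g x + h1 x - h2 x)%:E)
  else +oo%E.

Definition domF (f g h1 h2 : vec -> R) (C : set vec) : set vec :=
  [set x | Fobj f g h1 h2 C x < +oo]%E.

Definition Hfun (f g h1 h2 : vec -> R) (C : set vec) (x z : vec) (c : R)
  : \bar R :=
  ((2 * c * f x)%:E + indic C x + (- c ^+ 2 * g x + h1 x)%:E
   + conj_fun h2 z - (dotv x z)%:E)%E.

Definition trial_point (f g h1 : vec -> R) (C : set vec)
  (xk zk : vec) (ck alpha : R) (xh : vec) : Prop :=
  is_prox (fun u => ((2 * alpha * ck * f u)%:E + indic C u)%E)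
    (xk - alpha *: (grad h1 xk - ck ^+ 2 *: grad g xk - zk)) xh.

Definition accepted (f g h1 h2 : vec -> R) (C : set vec) (sigma : R)
  (xk zk xh : vec) : Prop :=
  Omega g xh /\
  (Hfun f g h1 h2 C xh zk (f xh / g xh) + (sigma / 2 * norm2 (xh - xk) ^+ 2)%:E
     <= Fobj f g h1 h2 C xk)%E.

(* At iteration k,
   alpha_tilde_k in [alo, ahi] is chosen; the line search tries
   alpha = alpha_tilde_k * r^i, i = 0, 1, ..., each time computing some
   element of the prox; trials i < j fail, trial j succeeds and gives x^{k+1}. *)
Definition generated_by_alg1 (f g h1 h2 : vec -> R) (C : set vec)
  (alo ahi sigma r : R) (x0 : vec)
  (x z : nat -> vec) (c : nat -> R) : Prop :=
  x 0%N = x0 /\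
  forall k : nat,
    c k = f (x k) / g (x k) /\
    subdiff h2 (x k) (z k) /\
    exists2 at_ : R, alo <= at_ <= ahi &
    exists j : nat,
      (forall i : nat, (i < j)%N -> exists xh : vec,
          trial_point f g h1 C (x k) (z k) (c k) (at_ * r ^+ i) xh /\
          ~ accepted f g h1 h2 C sigma (x k) (z k) xh) /\
      trial_point f g h1 C (x k) (z k) (c k) (at_ * r ^+ j) (x k.+1) /\
      accepted f g h1 h2 C sigma (x k) (z k) (x k.+1).

End Defs.

(* Main.v *)
Require Import Defs.
From HB Require Import structures.
From mathcomp Require Import all_boot all_order all_algebra.
From mathcomp Require Import all_classical all_reals all_analysis.
From mathcomp Require Import ring lra.
Import Order.TTheory GRing.Theory Num.Theory.
Import numFieldNormedType.Exports.
Local Open Scope classical_set_scope.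
Local Open Scope ring_scope.

Section Helpers.
Context {R : realType}.

Definition box {n : nat} (M : R) (x : 'rV[R]_n) := forall i, `|x 0 i| <= M.

Lemma compact_box {n : nat} (A : set 'rV[R]_n) : compact A ->
  exists2 M : R, 0 < M & forall x, A x -> box M x.
Proof.
move=> cA; have [M0 [M0r HM]] := compact_bounded cA.
have lt : M0 < `|M0| + 1 by apply: (le_lt_trans (real_ler_norm M0r)); rewrite ltrDl.
exists (`|M0| + 1); first by apply: (le_lt_trans (normr_ge0 M0)); rewrite ltrDl.
move=> x Ax i; have := HM _ lt x Ax => /=.
apply: le_trans.
have -> : `|x| = mx_norm x by [].
rewrite mx_normrE.
exact: (le_bigmax _ (fun ij : 'I_1 * 'I_n => `|x ij.1 ij.2|) (0, i)).
Qed.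

Lemma conv_line {n : nat} (h : 'rV[R]_n -> R) (hc : convex_fun h) (K t : R) (e : 'rV[R]_n) :
  0 < K -> `|t| <= K -> h (t *: e) <= `|h (K *: e)| + `|h ((- K) *: e)|.
Proof.
move=> K0 tK.
set l := (t + K) / (2 * K).
have l0 : 0 <= l <= 1.
  rewrite /l; have := ler_norml t K; rewrite tK => /esym/andP[h1 h2].
  apply/andP; split.
    by apply: divr_ge0; lra.
  by rewrite ler_pdivrMr; lra.
have -> : t *: e = l *: (K *: e) + (1 - l) *: ((- K) *: e).
  rewrite !scalerA -scalerDl; congr (_ *: e); rewrite /l; field.
  by rewrite lt0r_neq0 //; lra.
apply: (le_trans (hc _ _ _ l0)).
have a1 := ler_norm (h (K *: e)); have a2 := ler_norm (h ((- K) *: e)).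
have b1 := normr_ge0 (h (K *: e)); have b2 := normr_ge0 (h ((- K) *: e)).
move: l0 => /andP[l0 l1].
nra.
Qed.


Lemma conv_avg {n : nat} (h : 'rV[R]_n -> R) (hc : convex_fun h) (w : nat -> 'rV[R]_n) (B : R) :
  (forall i, h (w i) <= B) ->
  forall m, (0 < m)%N -> h ((m%:R)^-1 *: \sum_(i < m) w i) <= B.
Proof.
move=> hw; elim=> [//|m IH] _.
case: m IH => [|m] IH.
  by rewrite big_ord1 invr1 scale1r.
have m0 : (m.+1%:R : R) != 0 by rewrite pnatr_eq0.
have m1 : (m.+2%:R : R) != 0 by rewrite pnatr_eq0.
set t : R := m.+1%:R / m.+2%:R.
have -> : (m.+2%:R)^-1 *: \sum_(i < m.+2) w i =
   t *: ((m.+1%:R)^-1 *: \sum_(i < m.+1) w i) + (1 - t) *: w m.+1.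
  rewrite big_ord_recr /= scalerDr !scalerA; congr (_ *: _ + _ *: _);
  rewrite /t; field; have hm := ler0n R m; rewrite ?lt0r_neq0 //; lra.
have t01 : 0 <= t <= 1.
  rewrite /t divr_ge0 //= ler_pdivrMr ?ltr0n // mul1r ler_nat; by [].
apply: (le_trans (hc _ _ _ t01)).
have := IH erefl; have := hw m.+1; move: t01 => /andP[t0 t1]; nra.
Qed.

Lemma conv_ub {n : nat} (h : 'rV[R]_n -> R) (hc : convex_fun h) (M : R) : 0 < M ->
  exists B, forall x, box M x -> h x <= B.
Proof.
move=> M0; case: n h hc => [|n'] h hc.
  exists `|h 0| => x _; by rewrite (thinmx0 x) ler_norm.
set K : R := n'.+1%:R * M.
exists (`|h 0| + \sum_(j < n'.+1) (`|h (K *: 'e_j)| + `|h ((- K) *: 'e_j)|)).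
move=> x bx.
have s0 : 0 <= \sum_(j < n'.+1) (`|h (K *: 'e_j)| + `|h ((- K) *: 'e_j)|).
  by apply: sumr_ge0 => j _; rewrite addr_ge0.
have h0 : h 0 <= `|h 0| + \sum_(j < n'.+1) (`|h (K *: 'e_j)| + `|h ((- K) *: 'e_j)|).
  by apply: (le_trans (ler_norm _)); rewrite lerDl.
set B := (X in _ <= X) in h0 *.
pose w (i : nat) : 'rV[R]_n'.+1 :=
  if (i < n'.+1)%N then (n'.+1%:R * x 0 (inord i)) *: 'e_(inord i) else 0.
have hw : forall i, h (w i) <= B.
  move=> i; rewrite /w; case: ifP => // _.
  apply: (le_trans (@conv_line n'.+1 h hc K _ _ _ _)).
  - by rewrite /K mulr_gt0.
  - by rewrite normrM ger0_norm // /K ler_pM2l // bx.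
  rewrite /B (bigD1 (inord i)) //= addrA.
  have := normr_ge0 (h 0).
  have : 0 <= \sum_(i0 < n'.+1 | i0 != @inord n' i) (`|h (K *: 'e_i0)| + `|h (- K *: 'e_i0)|).
    by apply: sumr_ge0 => j _; rewrite addr_ge0.
  lra.
have := @conv_avg _ h hc _ _ hw _ (ltn0Sn n').
suff -> : (n'.+1%:R)^-1 *: \sum_(i < n'.+1) w i = x by [].
rewrite [RHS](row_sum_delta x) scaler_sumr; apply: eq_bigr => i _.
rewrite /w ltn_ord inord_val scalerA mulrA mulVf ?mul1r // pnatr_eq0.
Qed.

Lemma conv_lb {n : nat} (h : 'rV[R]_n -> R) (hc : convex_fun h) (M : R) : 0 < M ->
  exists B, forall x, box M x -> B <= h x.
Proof.
move=> M0; have [B HB] := @conv_ub _ h hc _ M0.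
exists (2 * h 0 - B) => x bx.
have t01 : 0 <= (2^-1 : R) <= 1 by apply/andP; split; lra.
have := hc x (- x) _ t01.
have -> : 2^-1 *: x + (1 - 2^-1) *: - x = 0 :> 'rV[R]_n.
  have e : (2^-1 - (1 - 2^-1) : R) = 0 by field.
  by rewrite scalerN -scalerBl e scale0r.
have : h (- x) <= B by apply: HB => i; rewrite mxE normrN.
lra.
Qed.


Lemma cont_bnd {n : nat} (g : 'rV[R]_n -> R) (A : set 'rV[R]_n) :
  continuous g -> compact A -> exists K, forall x, A x -> `|g x| <= K.
Proof.
move=> gc cA.
have cI := continuous_compact (continuous_subspaceT gc) cA.
have [M0 [M0r HM]] := compact_bounded cI.
have lt : M0 < `|M0| + 1 by apply: (le_lt_trans (real_ler_norm M0r)); rewrite ltrDl.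
exists (`|M0| + 1) => x Ax; apply: (HM _ lt); by exists x.
Qed.

Lemma cont_pos {n : nat} (g : 'rV[R]_n -> R) (A : set 'rV[R]_n) :
  continuous g -> compact A -> (forall x, A x -> g x != 0) ->
  exists2 e, 0 < e & forall x, A x -> e <= `|g x|.
Proof.
move=> gc cA gA.
have cI := continuous_compact (continuous_subspaceT gc) cA.
have clI := compact_closed (@Rhausdorff R) cI.
have oI := closed_openC clI.
have : nbhs (0 : R) (~` [set g x | x in A]).
  apply: open_nbhs_nbhs; split => //.
  by move=> [y Ay gy]; move: (gA y Ay); rewrite gy eqxx.
move=> /nbhs_ballP [e e0 He]; exists e => // x Ax.
rewrite leNgt; apply/negP => lte.
have : ball (0 : R) e (g x).
  by rewrite /ball /= sub0r normrN.
move=> /He; apply; by exists x.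
Qed.

Lemma dotv_e {n : nat} (z : 'rV[R]_n) j : dotv z 'e_j = z 0 j.
Proof.
rewrite /dotv (bigD1 j) //= big1 ?addr0.
  by rewrite mxE !eqxx mulr1.
by move=> i ij; rewrite mxE (negbTE ij) andbF mulr0.
Qed.

Lemma norm2_box {n : nat} (M : R) (x : 'rV[R]_n) : box M x ->
  norm2 x <= Num.sqrt (n%:R * M ^+ 2).
Proof.
move=> bx; apply: ler_wsqrtr; rewrite /dotv.
have -> : n%:R * M ^+ 2 = \sum_(i < n) M ^+ 2.
  by rewrite sumr_const card_ord mulr_natl.
apply: ler_sum => i _.
have := bx i; rewrite ler_norml => /andP[a b]; nra.
Qed.


Definition Freal {n : nat} (f g h1 h2 : 'rV[R]_n -> R) (u : 'rV[R]_n) : R :=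
  f u ^+ 2 / g u + h1 u - h2 u.

Lemma Fobj_in {n : nat} (f g h1 h2 : 'rV[R]_n -> R) C u :
  Omega g u /\ C u -> Fobj f g h1 h2 C u = (Freal f g h1 h2 u)%:E.
Proof. by move=> H; rewrite /Fobj asboolT. Qed.

Lemma Fobj_dom {n : nat} (f g h1 h2 : 'rV[R]_n -> R) C u :
  (Fobj f g h1 h2 C u < +oo)%E -> Omega g u /\ C u.
Proof.
rewrite /Fobj; case: (pselect (Omega g u /\ C u)) => [//|H].
by rewrite asboolF // ltxx.
Qed.

Lemma step {n : nat} (f g h1 h2 : 'rV[R]_n -> R) C sigma (xk zk xn : 'rV[R]_n) :
  Omega g xk /\ C xk -> accepted f g h1 h2 C sigma xk zk xn ->
  [/\ Omega g xn, C xn &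
   Freal f g h1 h2 xn + sigma / 2 * norm2 (xn - xk) ^+ 2 <= Freal f g h1 h2 xk].
Proof.
move=> Hk [On Hacc]; rewrite Fobj_in // in Hacc.
set c := f xn / g xn in Hacc.
have cub : ((dotv xn zk - h2 xn)%:E <= conj_fun h2 zk)%E.
  by apply: ereal_sup_ubound; exists xn.
have cninf : conj_fun h2 zk != -oo%E.
  by apply: contraTneq cub => ->; rewrite leeNy_eq.
case: (pselect (C xn)) => Cn; last first.
  have : (+oo <= Hfun f g h1 h2 C xn zk c)%E.
    rewrite /Hfun /Defs.indic asboolF //. rewrite addey //; rewrite ?addye //.
  move=> HH; have := le_trans (leeD HH (lexx (sigma / 2 * norm2 (xn - xk) ^+ 2)%:E)) Hacc.
  by rewrite addye.
have LBH : (((2 * c * f xn)%:E + 0%E + (- c ^+ 2 * g xn + h1 xn)%:E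
   + (dotv xn zk - h2 xn)%:E - (dotv xn zk)%:E)%E <= Hfun f g h1 h2 C xn zk c)%E.
  rewrite /Hfun /Defs.indic asboolT //; apply: leeD => //; apply: leeD => //.
have := le_trans (leeD LBH (lexx (sigma / 2 * norm2 (xn - xk) ^+ 2)%:E)) Hacc.
rewrite adde0 -EFinN -!EFinD lee_fin => H.
split => //; apply: le_trans H; rewrite lerD2r /Freal /c.
have gn : g xn != 0 by exact: On.
rewrite le_eqVlt; apply/orP; left; apply/eqP; by field.
Qed.


Lemma dotvN {n : nat} (z e : 'rV[R]_n) : dotv z (- e) = - dotv z e.
Proof. by rewrite /dotv -sumrN; apply: eq_bigr => i _; rewrite mxE mulrN. Qed.

Lemma box_e {n : nat} (M : R) (x : 'rV[R]_n) j (s : R) : `|s| <= 1 ->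
  box M x -> box (M + 1) (x + s *: 'e_j).
Proof.
move=> s1 bx i; rewrite !mxE; apply: (le_trans (ler_normD _ _)).
apply: lerD => //; rewrite normrM; case: (_ && _) => /=.
  by rewrite normr1 mulr1.
by rewrite normr0 mulr0.
Qed.

End Helpers.
Arguments compact_box {R n A}.
Arguments cont_bnd {R n g A}.
Arguments cont_pos {R n g A}.
Arguments Fobj_in {R n f g h1 h2 C u}.
Arguments Fobj_dom {R n f g h1 h2 C u}.
Arguments step {R n f g h1 h2 C sigma xk zk xn}.
Theorem corollary4p1 (R : realType) (n : nat)
  (f g h1 h2 : 'rV[R]_n -> R) (C : set 'rV[R]_n)
  (alo ahi sigma r : R) (x0 : 'rV[R]_n)
  (x z : nat -> 'rV[R]_n) (c : nat -> R) :
  (forall u, 0 <= f u) -> (forall u, 0 <= g u) ->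
  closed C -> convex_set C ->
  (Omega g `&` C !=set0) ->
  convex_fun f ->
  diff_loclip_grad g ->
  diff_loclip_grad h1 ->
  convex_fun h2 ->
  0 < alo -> alo < ahi -> 0 < sigma -> 0 < r -> r < 1 ->
  domF f g h1 h2 C x0 ->
  compact [set u | domF f g h1 h2 C u /\
                   (Fobj f g h1 h2 C u <= Fobj f g h1 h2 C x0)%E] ->
  generated_by_alg1 f g h1 h2 C alo ahi sigma r x0 x z c ->
  (exists M : R, forall k,
      norm2 (x k) <= M /\ norm2 (z k) <= M /\ `|c k| <= M) /\
  (exists l : R, (fun k => Fobj f g h1 h2 C (x k)) @ \oo --> l%:E) /\
  ((fun k => norm2 (x k.+1 - x k)) @ \oo --> (0 : R)).
Proof.
move=> f0 g0 clC cvC ne fc gd h1d h2c alo0 aloahi s0 r0 r1 dom0 cX0 [x0E alg].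
set X0 := [set u | _ /\ _] in cX0.
pose a k := Freal f g h1 h2 (x k).
have s2 : 0 <= sigma / 2 by apply: divr_ge0; lra.
have inv : forall k, (Omega g (x k) /\ C (x k)) /\ a k <= Freal f g h1 h2 x0.
  elim=> [|k [Hk Hle]].
    rewrite /a x0E; split; [exact: Fobj_dom dom0 | exact: lexx].
  have [_ [_ [at_ _ [j [_ [_ acc]]]]]] := alg k.
  have [On Cn Hs] := step Hk acc.
  split => //; apply: le_trans Hle; apply: le_trans Hs; rewrite lerDl.
  by apply: mulr_ge0 => //; exact: sqr_ge0.
have dec : forall k, a k.+1 + sigma / 2 * norm2 (x k.+1 - x k) ^+ 2 <= a k.
  move=> k; have [Hk _] := inv k.
  have [_ [_ [at_ _ [j [_ [_ acc]]]]]] := alg k.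
  by case: (step Hk acc).
have inX0 : forall k, X0 (x k).
  move=> k; have [Hk Hle] := inv k; rewrite /X0 /=; split.
    by rewrite /domF /= (Fobj_in Hk) ltey.
  by rewrite (Fobj_in Hk) (Fobj_in (Fobj_dom dom0)) lee_fin.
have Xg : forall u, X0 u -> g u != 0.
  by move=> u [du _]; have [Ou _] := Fobj_dom du; exact: Ou.
have [M M0 bM] := compact_box cX0.
have gc : continuous g := fun u => differentiable_continuous (gd.1 u).
have h1c : continuous h1 := fun u => differentiable_continuous (h1d.1 u).
have [K1 HK1] := cont_bnd h1c cX0.
have [eps eps0 Heps] := cont_pos gc cX0 Xg.
have M1 : 0 < M + 1 by lra.
have [U2 HU2] := @conv_ub _ _ h2 h2c M M0.
have [U2' HU2'] := @conv_ub _ _ h2 h2c (M + 1) M1.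
have [L2 HL2] := @conv_lb _ _ h2 h2c M M0.
have [Uf HUf] := @conv_ub _ _ f fc M M0.
have lb : forall k, - K1 - U2 <= a k.
  move=> k; rewrite /a /Freal.
  have gpos : 0 <= f (x k) ^+ 2 / g (x k) by apply: divr_ge0; [exact: sqr_ge0 | exact: g0].
  have := HK1 _ (inX0 k); rewrite ler_norml => /andP[l1 _].
  have := HU2 _ (bM _ (inX0 k)); lra.
have noninc : {homo a : p q / (p <= q)%N >-> q <= p}.
  apply/nonincreasing_seqP => k; have := dec k.
  have : 0 <= sigma / 2 * norm2 (x k.+1 - x k) ^+ 2 by apply: mulr_ge0 => //; exact: sqr_ge0.
  lra.
have ca : a @ \oo --> inf (range a).
  apply: nonincreasing_cvgn noninc _.
  by exists (- K1 - U2) => y [k _ <-]; exact: lb.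
split; last split.
- set Z := U2' - L2.
  have bz : forall k, box Z (z k).
    move=> k j; have [_ [sd _]] := alg k.
    have bxk := bM _ (inX0 k).
    have p := sd (x k + 1 *: 'e_j); have q := sd (x k + (-1) *: 'e_j).
    have e1 : x k + 1 *: 'e_j - x k = 'e_j by rewrite scale1r addrC addKr.
    have e2 : x k + (-1) *: 'e_j - x k = - 'e_j by rewrite scaleN1r addrC addKr.
    rewrite e1 dotv_e in p; rewrite e2 dotvN dotv_e in q.
    have u1 := HU2' _ (@box_e _ _ M (x k) j 1 ltac:(by rewrite normr1) bxk).
    have u2 := HU2' _ (@box_e _ _ M (x k) j (-1) ltac:(by rewrite normrN normr1) bxk).
    have l2 := HL2 _ bxk.
    rewrite ler_norml; apply/andP; split; rewrite /Z; lra.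
  have Ufp : 0 <= Uf by apply: le_trans (HUf _ (bM _ (inX0 0%N))); exact: f0.
  exists (Num.sqrt (n%:R * M ^+ 2) + Num.sqrt (n%:R * Z ^+ 2) + Uf / eps) => k.
  have m1 := sqrtr_ge0 (n%:R * M ^+ 2).
  have m2 := sqrtr_ge0 (n%:R * Z ^+ 2).
  have m3 : 0 <= Uf / eps by apply: divr_ge0 => //; exact: ltW.
  have nx := @norm2_box _ _ _ _ (bM _ (inX0 k)).
  have nz := @norm2_box _ _ _ _ (bz k).
  have nc : `|c k| <= Uf / eps.
    have [ce _] := alg k; rewrite ce.
    have gk := Heps _ (inX0 k).
    have fk := HUf _ (bM _ (inX0 k)).
    have fk0 := f0 (x k).
    have gk0 := g0 (x k).
    rewrite ger0_norm in gk => //.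
    have gpos : 0 < g (x k) by apply: lt_le_trans gk.
    rewrite ger0_norm; last by apply: divr_ge0.
    rewrite ler_pdivrMr //.
    set Q := Uf / eps.
    have QE : Q * eps = Uf by rewrite /Q mulfVK // gt_eqF.
    nra.
  split; [|split]; lra.
- exists (inf (range a)).
  have -> : (fun k => Fobj f g h1 h2 C (x k)) = (fun k => (a k)%:E).
    by apply: funext => k; rewrite Fobj_in //; have [] := inv k.
  apply: cvg_EFin; [by near=> k | exact: ca].
- apply/cvgr0Pnorm_lt => e e0.
  have ca1 : (fun k => a k.+1) @ \oo --> inf (range a).
    by have := ca; rewrite -cvg_shiftS.
  have cd : (fun k => a k - a k.+1) @ \oo --> 0.
    by have := cvgB ca ca1; rewrite subrr; apply.
  have see : 0 < sigma * e ^+ 2 / 2 by apply: divr_gt0 => //; apply: mulr_gt0 => //; exact: exprn_gt0.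
  have H := (cvgr0Pnorm_lt (fun k => a k - a k.+1)).1 cd _ see.
  near=> k.
  have hk : `|a k - a k.+1| < sigma * e ^+ 2 / 2 by near: k; exact: H.
  have d0 : 0 <= norm2 (x k.+1 - x k) by exact: sqrtr_ge0.
  rewrite ger0_norm //.
  have := dec k; move: hk; rewrite ltr_norml => /andP[_ hk].
  set d := norm2 _ in d0 *; move=> hd.
  have dd : d ^+ 2 < e ^+ 2.
    have : sigma * d ^+ 2 < sigma * e ^+ 2 by lra.
    by rewrite ltr_pM2l.
  nra.
Unshelve. all: by end_near.
Qed.
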